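(* Let $C$ be a subset of $Ob(CC(R,LM))$ closed under $ft$, and let $\le$ be a transitive relation on $C$ such that (1) $\Gamma\le\Gamma'$ implies $l(\Gamma)=l(\Gamma')$, and (2) for $\Gamma\in C$ and $F\in C$ with $ft(\Gamma)\le F$, one has $\sigma(\Gamma,F)\in C$ and $\Gamma\le\sigma(\Gamma,F)$. Then for $\Gamma\in C$ and $F\in C$ with $ft^i(\Gamma)\le F$ for some $i\ge1$, one has $\Gamma\le\sigma(\Gamma,F)$.
   Context: $[n]=\{1,\dots,n\}$; $R$ is a monad on Sets and $LM$ a left $R$-module with values in Sets. $Ob(CC(R,LM))$ is the set of finite sequences $(T_1,\dots,T_n)$, $n\ge0$, with $T_j\in LM([j-1])$; $l(T_1,\dots,T_n)=n$; $ft(T_1,\dots,T_n)=(T_1,\dots,T_{n-1})$ for $n\ge1$ and $ft()=()$. For $\Gamma=(T_1,\dots,T_{n+k})$ with $k>0$ and $\Gamma'=(T'_1,\dots,T'_n)$, $\sigma(\Gamma,\Gamma'):=(T'_1,\dots,T'_n,T_{n+1},\dots,T_{n+k})$ (defined only when $l(\Gamma)>l(\Gamma')$). *)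

(* Defs.v *)
From mathcomp Require Import all_boot.
Set Implicit Arguments. Unset Strict Implicit. Unset Printing Implicit Defensive.

Record monad := Monad {
  mon :> Type -> Type;
  ret : forall X, X -> mon X;
  bind : forall X Y, mon X -> (X -> mon Y) -> mon Y;
  bind_ret_l : forall X Y (x : X) (f : X -> mon Y), bind (ret x) f = f x;
  bind_ret_r : forall X (m : mon X), bind m (@ret X) = m;
  bind_assoc : forall X Y Z (m : mon X) (f : X -> mon Y) (g : Y -> mon Z),
      bind (bind m f) g = bind m (fun x => bind (f x) g) }.

Record lmodule (R : monad) := LModule {
  lm :> Type -> Type;
  lbind : forall X Y, lm X -> (X -> R Y) -> lm Y;
  lbind_ret : forall X (m : lm X), lbind m (@ret R X) = m;
  lbind_assoc : forall X Y Z (m : lm X) (f : X -> R Y) (g : Y -> R Z),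
      lbind (lbind m f) g = lbind m (fun x => bind (f x) g) }.

(* [n] = {1,...,n} is represented by the n-element type 'I_n.
   A raw sequence of types: entries are pairs (k, T) with T in LM([k]). *)
Definition rawseq (R : monad) (LM : lmodule R) := seq {k : nat & LM 'I_k}.

(* Membership in Ob(CC(R,LM)): the j-th entry (1-based) lies in LM([j-1]). *)
Definition isOb (R : monad) (LM : lmodule R) (G : rawseq LM) : Prop :=
  map (fun t => projT1 t) G = iota 0 (size G).

Definition l (R : monad) (LM : lmodule R) (G : rawseq LM) : nat := size G.

Definition ft (R : monad) (LM : lmodule R) (G : rawseq LM) : rawseq LM :=
  take (size G).-1 G.

(* sigma(G, G') = (T'_1..T'_n, T_{n+1}..T_{n+k}); meaningful only when l G > l G' *)
Definition sigma (R : monad) (LM : lmodule R) (G G' : rawseq LM) : rawseq LM :=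
  G' ++ drop (size G') G.

(* Main.v *)
Require Import Defs.
From mathcomp Require Import all_boot.
From mathcomp Require Import zify.

Lemma size_ft (R : monad) (LM : lmodule R) (G : rawseq LM) : size (ft G) = (size G).-1.
Proof. rewrite /ft size_take; case: (size G) => //= n; by rewrite ltnSn. Qed.

Lemma size_iter_ft (R : monad) (LM : lmodule R) k (G : rawseq LM) :
  size (iter k (@ft R LM) G) = size G - k.
Proof. elim: k => [|k IH] /=; first by rewrite subn0. by rewrite size_ft IH subnS. Qed.

Lemma iter_ft_nil (R : monad) (LM : lmodule R) k :
  iter k (@ft R LM) [::] = [::].
Proof. by elim: k => //= k ->. Qed.

Lemma iter_ftS (R : monad) (LM : lmodule R) k (G : rawseq LM) :
  iter k.+1 (@ft R LM) G = iter k (@ft R LM) (ft G).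
Proof. by rewrite -iterSr. Qed.

Lemma drop_take_cat (T : Type) (s : seq T) m n :
  m <= n -> drop m (take n s) ++ drop n s = drop m s.
Proof.
  elim: s m n => [|x s IH] [|m] [|n] //=.
  - by rewrite cat_take_drop.
  - by move=> H; apply: IH.
Qed.

Theorem lemma6p7 (R : monad) (LM : lmodule R)
  (C : rawseq LM -> Prop) (le : rawseq LM -> rawseq LM -> Prop)
  (C_Ob : forall G, C G -> isOb G)
  (C_ft : forall G, C G -> C (ft G))
  (le_trans : forall G1 G2 G3, C G1 -> C G2 -> C G3 ->
      le G1 G2 -> le G2 G3 -> le G1 G3)
  (le_l : forall G G', C G -> C G' -> le G G' -> l G = l G')
  (le_sigma : forall G F, C G -> C F -> le (ft G) F -> l F < l G ->
      C (sigma G F) /\ le G (sigma G F)) :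
  forall (G F : rawseq LM) (i : nat), C G -> C F -> 1 <= i ->
    le (iter i (@ft R LM) G) F -> l F < l G -> le G (sigma G F).
Proof.
  suff H : forall i G F, C G -> C F -> le (iter i.+1 (@ft R LM) G) F -> l F < l G ->
      C (sigma G F) /\ le G (sigma G F).
    move=> G F [|i] CG CF // _ Hle Hl; by case: (H i G F CG CF Hle Hl).
  have iter_C : forall k G, C G -> C (iter k (@ft R LM) G).
    by move=> k G CG; elim: k => //= k IHk; apply: C_ft.
  elim=> [|i IH] G F CG CF Hle Hl; first by apply: le_sigma.
  rewrite iter_ftS in Hle.
  have CfG := C_ft _ CG.
  have Hlen := le_l _ _ (iter_C i.+1 _ CfG) CF Hle.
  case: (ltnP (l F) (l (ft G))) => Hlt.
  - case: (IH _ _ CfG CF Hle Hlt) => CH leH.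
    have lH : l (sigma (ft G) F) < l G.
      rewrite /l /sigma size_cat size_drop size_ft /l in Hlt *.
      rewrite subnKC; last exact: ltnW.
      by move: Hl; rewrite /l; case: (size G).
    case: (le_sigma _ _ CG CH leH lH) => C2 le2.
    suff E : sigma G (sigma (ft G) F) = sigma G F by rewrite -E.
    rewrite /l size_ft in Hlt.
    have Hs : size (drop (size F) (ft G)) + size F = (size G).-1.
      by rewrite size_drop size_ft subnK // ltnW.
    rewrite /sigma -catA size_cat addnC Hs.
    congr (F ++ _).
    by rewrite /ft drop_take_cat // ltnW.
  - have E1 : l F = l (ft G).
      apply/eqP; rewrite eqn_leq Hlt andbT.
      by rewrite /l size_ft; move: Hl; rewrite /l; case: (size G).
    have E0 : l (ft G) = 0.
      move: Hlen E1; rewrite /l size_iter_ft; lia.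
    have Hnil : ft G = [::] by apply/size0nil.
    rewrite Hnil iter_ft_nil in Hle.
    apply: le_sigma => //; by rewrite Hnil.
Qed.
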